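(* Consider the $N$-SP bandwidth allocation game with minimum small-cell bandwidth constraints described in the context, and let $a=N_f\lambda_S^{1/\alpha-1}$. If $$\frac{a}{a+N_m}\sum_{i\in\mathcal N}B_i<\sum_{i\in\mathcal N}B_{i,S}^0,$$ then $\mathrm{SW}_{\mathrm{w}}^{\mathrm{NE}}<\mathrm{SW}_{\mathrm{wo}}^{*}$ (a social welfare loss is incurred). Moreover, in all cases $$\frac{\mathrm{SW}_{\mathrm{w}}^{\mathrm{NE}}}{\mathrm{SW}_{\mathrm{wo}}^{*}}\ge\Big(\frac{a}{a+N_m}\Big)^{\alpha},$$ and this bound is attained exactly when $B_{i,S}^0=B_i$ for all $i\in\mathcal N$.
   Context: A set $\mathcal N$ of $N$ service providers (SPs). SP $i$ owns bandwidth $B_i>0$ and chooses macro-cell bandwidth $B_{i,M}\ge0$ and small-cell bandwidth $B_{i,S}$ with $B_{i,M}+B_{i,S}\le B_i$ and $B_{i,S}\ge B_{i,S}^0$ (regulatory constraint), where $0\le B_{i,S}^0\le B_i$ are given. Parameters: $R_0>0$, $\lambda_S>1$, a mass $N_m>0$ of mobile users (served only by macro-cells) and a mass $N_f>0$ of fixed users, each with utility $u(r)=r^{1-\alpha}/(1-\alpha)$, $\alpha\in(0,1)$. Second-stage prices are market-clearing: with $R_M=\frac{R_0\sum_iB_{i,M}}{N_m}$ and $R_S=\frac{\lambda_SR_0\sum_iB_{i,S}}{N_f}$, the macro and small-cell prices are $u'(R_M)=R_M^{-\alpha}$ and $u'(R_S)=R_S^{-\alpha}$, and each mobile user receives rate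 $R_M$ and each fixed user rate $R_S$. SP $i$'s payoff in the bandwidth game is its revenue $S_i=\lambda_SB_{i,S}R_0R_S^{-\alpha}+B_{i,M}R_0R_M^{-\alpha}$. Social welfare is $\mathrm{SW}=N_mu(R_M)+N_fu(R_S)$. $\mathrm{SW}_{\mathrm{w}}^{\mathrm{NE}}$ denotes the social welfare at the Nash equilibrium of the game with the regulatory constraints, and $\mathrm{SW}_{\mathrm{wo}}^{*}$ the social welfare at the Nash equilibrium of the game without them ($B_{i,S}^0=0$), which equals the maximal social welfare without constraints. *)

(* Defs.v *)
From HB Require Import structures.
From mathcomp Require Import all_boot all_order all_algebra.
From mathcomp Require Import all_classical all_reals all_analysis.
Set Implicit Arguments. Unset Strict Implicit. Unset Printing Implicit Defensive.
Import Order.TTheory GRing.Theory Num.Theory.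
Local Open Scope ring_scope.

(* A strategy profile: SP i plays (B_{i,M}, B_{i,S}) = (p i).1, (p i).2. *)
Definition profile (R : realType) (n : nat) := 'I_n -> R * R.

Definition deviate (R : realType) (n : nat) (p : profile R n) (i : 'I_n) (s : R * R)
  : profile R n := fun j => if j == i then s else p j.

Definition rateM (R : realType) (n : nat) (R0 Nm : R) (p : profile R n) : R :=
  R0 * (\sum_(j < n) (p j).1) / Nm.
Definition rateS (R : realType) (n : nat) (R0 lamS Nf : R) (p : profile R n) : R :=
  lamS * R0 * (\sum_(j < n) (p j).2) / Nf.

(* utility u(r) = r^(1-alpha)/(1-alpha); price u'(r) = r^(-alpha) *)
Definition util (R : realType) (alpha r : R) : R := r `^ (1 - alpha) / (1 - alpha).
Definition price (R : realType) (alpha r : R) : R := r `^ (- alpha).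

Definition revenue (R : realType) (n : nat) (R0 lamS Nm Nf alpha : R)
  (p : profile R n) (i : 'I_n) : R :=
  lamS * (p i).2 * R0 * price alpha (rateS R0 lamS Nf p)
  + (p i).1 * R0 * price alpha (rateM R0 Nm p).

Definition social_welfare (R : realType) (n : nat) (R0 lamS Nm Nf alpha : R)
  (p : profile R n) : R :=
  Nm * util alpha (rateM R0 Nm p) + Nf * util alpha (rateS R0 lamS Nf p).

Definition feasible (R : realType) (Bi B0i : R) (s : R * R) : Prop :=
  0 <= s.1 /\ B0i <= s.2 /\ s.1 + s.2 <= Bi.

Definition is_NE (R : realType) (n : nat) (R0 lamS Nm Nf alpha : R)
  (B B0 : 'I_n -> R) (p : profile R n) : Prop :=
  (forall i, feasible (B i) (B0 i) (p i)) /\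
  (forall i (s : R * R), feasible (B i) (B0 i) s ->
     revenue R0 lamS Nm Nf alpha (deviate p i s) i
       <= revenue R0 lamS Nm Nf alpha p i).

(* Main.v *)
Require Import Defs.
From HB Require Import structures.
From mathcomp Require Import all_boot all_order all_algebra.
From mathcomp Require Import all_classical all_reals all_analysis.
From mathcomp Require Import ring lra.
Import Order.TTheory GRing.Theory Num.Theory.
Local Open Scope ring_scope.
Set Implicit Arguments. Unset Strict Implicit.



Lemma ln_le_sub1 (R : realType) (r : R) : 0 < r -> ln r <= r - 1.
Proof.
move=> r0; have := expR_ge1Dx (ln r); rewrite lnK ?posrE //; lra.
Qed.

Lemma rpow_tan (R : realType) (a r : R) : 0 < a -> 0 < r ->
  1 - a * (r - 1) <= r `^ (- a).
Proof.
move=> a0 r0; rewrite /powR gt_eqF //.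
have h1 := expR_ge1Dx (- a * ln r).
have h2 := ln_le_sub1 r0.
have : - a * (r - 1) <= - a * ln r by nra.
lra.
Qed.

Lemma q_tan (R : realType) (a t T : R) : 0 < a -> 0 < t -> 0 < T ->
  T `^ (- a) - a * T `^ (- a) / T * (t - T) <= t `^ (- a).
Proof.
move=> a0 t0 T0.
have e : t `^ (- a) = T `^ (- a) * (t / T) `^ (- a).
  rewrite -powRM; [|lra|]; last by apply: divr_ge0; lra.
  by rewrite mulrC divfK // gt_eqF.
rewrite e.
have h := rpow_tan a0 (divr_gt0 t0 T0).
have hq := powR_gt0 (- a) T0.
have -> : T `^ (- a) - a * T `^ (- a) / T * (t - T)
  = T `^ (- a) * (1 - a * (t / T - 1)) by field; lra.
by rewrite ler_pM2l.
Qed.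

Lemma q_anti (R : realType) (a t T : R) : 0 < a -> 0 < t -> t <= T ->
  T `^ (- a) <= t `^ (- a).
Proof.
move=> a0 t0 tT.
have T0 : 0 < T by lra.
have h := q_tan a0 t0 T0.
have hq := powR_gt0 (- a) T0.
have : 0 <= a * T `^ (- a) / T * (T - t).
  apply: mulr_ge0; last lra.
  by apply: divr_ge0; nra.
lra.
Qed.

Lemma q_big (R : realType) (a M : R) : 0 < a -> 0 < M ->
  exists T : R, 0 < T /\ T `^ (- a) = M.
Proof.
move=> a0 M0; exists (M `^ (- a^-1)); split; first exact: powR_gt0.
rewrite -powRrM.
have -> : - a^-1 * - a = 1 by field; lra.
by rewrite powRr1 //; lra.
Qed.

Lemma pow1a (R : realType) (a x : R) : a != 1 -> 0 <= x ->
  x `^ (1 - a) = x * x `^ (- a).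
Proof.
move=> a1; rewrite le_eqVlt => /predU1P[<-|x0].
  by rewrite mul0r powR0 // subr_eq0 eq_sym.
rewrite powRD; last by rewrite (gt_eqF x0) implybT.
by rewrite powRr1 //; lra.
Qed.

Lemma rpow_conc (R : realType) (b r : R) : 0 < b -> b < 1 -> 0 < r -> r != 1 ->
  r `^ b < 1 + b * (r - 1).
Proof.
move=> b0 b1 r0 r1.
set L := ln r.
have L0 : L != 0 by rewrite /L ln_eq0.
have rE : r = expR L by rewrite /L lnK.
have -> : r `^ b = expR (b * L) by rewrite /powR gt_eqF.
set E := expR (b * L).
have E0 : 0 < E := expR_gt0 _.
have e1 : r = E * expR ((1 - b) * L) by rewrite rE /E -expRD; congr expR; ring.
have e2 : 1 = E * expR (- (b * L)) by rewrite /E -expRD subrr expR0.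
have h1 := expR_gt1Dx (x := (1 - b) * L).
have h2 := expR_gt1Dx (x := - (b * L)).
have n1 : (1 - b) * L != 0 by rewrite mulf_neq0 // subr_eq0 eq_sym lt_eqF.
have n2 : - (b * L) != 0 by rewrite oppr_eq0 mulf_neq0 // gt_eqF.
have k1 : E * (1 + (1 - b) * L) < r by rewrite e1 ltr_pM2l // h1.
have k2 : E * (1 + - (b * L)) < 1 by rewrite [X in _ < X]e2 ltr_pM2l // h2.
have m1 : b * (E * (1 + (1 - b) * L)) < b * r by rewrite ltr_pM2l.
have m2 : (1 - b) * (E * (1 + - (b * L))) < (1 - b) * 1 by rewrite ltr_pM2l // subr_gt0.
have -> : E = b * (E * (1 + (1 - b) * L)) + (1 - b) * (E * (1 + - (b * L))) by ring.
lra.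
Qed.

Lemma conc (R : realType) (a t T : R) : 0 < a -> a < 1 -> 0 <= t -> 0 < T -> t != T ->
  t `^ (1 - a) < T `^ (1 - a) + (1 - a) * T `^ (- a) * (t - T).
Proof.
move=> a0 a1 t0 T0 tT.
have a1' : a != 1 by rewrite lt_eqF.
rewrite !pow1a //; last lra.
have hq := powR_gt0 (- a) T0.
move: t0; rewrite le_eqVlt => /predU1P[<-|t0].
  have := mulr_gt0 a0 (mulr_gt0 T0 hq); rewrite mul0r; nra.
have r1 : t / T != 1.
  apply/negP => /eqP h; move/eqP: tT; apply.
  by have := h; move/(congr1 (fun z => z * T)); rewrite mulfVK ?gt_eqF // mul1r.
have h := rpow_conc (b := 1 - a) (r := t / T) ltac:(lra) ltac:(lra) (divr_gt0 t0 T0) r1.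
have e : t `^ (1 - a) = T `^ (1 - a) * (t / T) `^ (1 - a).
  rewrite -powRM; [|lra|]; last by apply: divr_ge0; lra.
  by rewrite mulrC divfK // gt_eqF.
rewrite -(pow1a a1' (ltW t0)) -(pow1a a1' (ltW T0)) e.
have P0 : 0 < T `^ (1 - a) by apply: powR_gt0.
have eP : T `^ (- a) = T `^ (1 - a) / T by rewrite (pow1a a1' (ltW T0)); field; lra.
rewrite eP.
have -> : T `^ (1 - a) + (1 - a) * (T `^ (1 - a) / T) * (t - T) =
  T `^ (1 - a) * (1 + (1 - a) * (t / T - 1)) by field; lra.
by rewrite ltr_pM2l.
Qed.




Lemma G_pos (R : realType) (a w1 w2 T1 T2 x1 x2 D : R) :
  0 < a -> a < 1 -> 0 < w1 -> 0 < w2 -> 0 <= x2 -> x2 <= T2 -> 0 < D -> D <= x1 -> x1 <= T1 ->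
  (forall d, 0 < d -> d <= D -> w2 * (x2 + d) * (T2 + d) `^ (- a) + w1 * (x1 - d) * (T1 - d) `^ (- a)
     <= w2 * x2 * T2 `^ (- a) + w1 * x1 * T1 `^ (- a)) ->
  0 < T2.
Proof.
move=> a0 a1 w10 w20 x20 x2T D0 Dx1 x1T H.
have T1p : 0 < T1 by lra.
have [T2z|T2n] := eqVneq T2 0; last by rewrite lt_neqAle eq_sym T2n; lra.
have x2z : x2 = 0 by lra.
set Q := (T1 / 2) `^ (- a).
have Q0 : 0 < Q by apply: powR_gt0; lra.
have M0 : 0 < w1 * Q / w2 + 1 by have := divr_gt0 (mulr_gt0 w10 Q0) w20; lra.
have [T [T0 qT]] := q_big a0 M0.
set d := Order.min T (Order.min D (T1 / 2)).
have dT : d <= T by rewrite /d ge_min lexx.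
have dD : d <= D by rewrite /d ge_min ge_min lexx orbT.
have dT1 : d <= T1 / 2 by rewrite /d ge_min ge_min lexx !orbT.
have d0 : 0 < d by rewrite /d !lt_min T0 D0 /=; lra.
have Hd := H d d0 dD.
rewrite T2z x2z !add0r mulr0 mul0r add0r in Hd.
have qd : T `^ (- a) <= d `^ (- a) by apply: q_anti.
have q1 : T1 `^ (- a) <= (T1 - d) `^ (- a) by apply: q_anti; lra.
have q2 : (T1 - d) `^ (- a) <= Q by apply: q_anti; lra.
have e1 : w1 * x1 * T1 `^ (- a) <= w1 * x1 * (T1 - d) `^ (- a).
  by apply: ler_wpM2l => //; apply: mulr_ge0; lra.
have e2 : w1 * d * (T1 - d) `^ (- a) <= w1 * d * Q.
  by apply: ler_wpM2l => //; apply: mulr_ge0; lra.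
have e3 : w2 * d * d `^ (- a) <= w1 * d * Q.
  have eq : w1 * (x1 - d) * (T1 - d) `^ (- a) = w1 * x1 * (T1 - d) `^ (- a) - w1 * d * (T1 - d) `^ (- a) by ring.
  rewrite eq in Hd.
  lra.
have e4 : w2 * d `^ (- a) <= w1 * Q.
  rewrite -(ler_pM2l d0); have -> : d * (w2 * d `^ (- a)) = w2 * d * d `^ (- a) by ring.
  by have -> : d * (w1 * Q) = w1 * d * Q by ring.
have e5 : w2 * (w1 * Q / w2 + 1) <= w2 * d `^ (- a) by rewrite ler_pM2l // -qT.
have : w2 * (w1 * Q / w2 + 1) = w1 * Q + w2 by field; lra.
lra.
Qed.

Lemma G_foc (R : realType) (a w1 w2 T1 T2 x1 x2 D : R) :
  0 < a -> a < 1 -> 0 < w1 -> 0 < w2 -> 0 <= x2 -> x2 <= T2 -> 0 < D -> D <= x1 -> x1 <= T1 ->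
  (forall d, 0 < d -> d <= D -> w2 * (x2 + d) * (T2 + d) `^ (- a) + w1 * (x1 - d) * (T1 - d) `^ (- a)
     <= w2 * x2 * T2 `^ (- a) + w1 * x1 * T1 `^ (- a)) ->
  0 < T2 /\ w2 * T2 `^ (- a) * (1 - a * x2 / T2) <= w1 * T1 `^ (- a) * (1 - a * x1 / T1).
Proof.
move=> a0 a1 w10 w20 x20 x2T D0 Dx1 x1T H.
have T2p := G_pos a0 a1 w10 w20 x20 x2T D0 Dx1 x1T H.
split => //.
have T1p : 0 < T1 by lra.
set Q1 := T1 `^ (- a); set Q2 := T2 `^ (- a).
have Q10 : 0 < Q1 by apply: powR_gt0.
have Q20 : 0 < Q2 by apply: powR_gt0.
set L0 := w2 * Q2 * (1 - a * x2 / T2) - w1 * Q1 * (1 - a * x1 / T1).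
rewrite leNgt; apply/negP => L0n.
have L0p : 0 < L0 by rewrite /L0 subr_gt0.
set C := a * (w2 * Q2 / T2 + 2 * w1 * Q1 / T1).
have C0 : 0 < C.
  have h1 : 0 < w2 * Q2 / T2 by apply: divr_gt0 => //; apply: mulr_gt0.
  have h2 : 0 < 2 * w1 * Q1 / T1 by apply: divr_gt0 => //; apply: mulr_gt0 => //; apply: mulr_gt0.
  by apply: mulr_gt0 => //; apply: addr_gt0.
set d := Order.min D (Order.min (T1 / 4) (L0 / (2 * C))).
have dD : d <= D by rewrite /d ge_min lexx.
have dT1 : d <= T1 / 4 by rewrite /d ge_min ge_min lexx !orbT.
have dL : d <= L0 / (2 * C) by rewrite /d ge_min ge_min lexx !orbT.
have d0 : 0 < d.
  rewrite /d !lt_min D0 /=; apply/andP; split; first lra.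
  by apply: divr_gt0 => //; lra.
have Hd := H d d0 dD.
set P2 := (T2 + d) `^ (- a); set P := (T1 - d) `^ (- a).
have P0 : 0 < P by apply: powR_gt0; lra.
have F1 : Q2 - a * Q2 / T2 * d <= P2.
  have := q_tan a0 (t := T2 + d) (T := T2) ltac:(lra) T2p.
  by rewrite -/Q2 -/P2 addrAC subrr add0r.
have F2 : Q1 + a * Q1 / T1 * d <= P.
  have := q_tan a0 (t := T1 - d) (T := T1) ltac:(lra) T1p.
  have -> : T1 - d - T1 = - d by ring.
  by rewrite -/Q1 -/P mulrN opprK.
have F3 : P * (T1 - d - a * d) <= Q1 * (T1 - d).
  have := q_tan a0 (t := T1) (T := T1 - d) T1p ltac:(lra).
  rewrite -/Q1 -/P => h.
  have u0 : 0 < T1 - d by lra.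
  have : P - a * P / (T1 - d) * (T1 - (T1 - d)) = (P * (T1 - d - a * d)) / (T1 - d).
    by field; lra.
  move=> e; rewrite e ler_pdivrMr // in h.
have F4 : P * T1 <= Q1 * (T1 + 2 * a * d).
  have v0 : 0 < T1 - d - a * d by nra.
  have k : (T1 - d) * T1 <= (T1 + 2 * a * d) * (T1 - d - a * d).
    have hh : 0 <= (a * d) * (T1 - 2 * d * (1 + a)) by apply: mulr_ge0; nra.
    have -> : (T1 + 2 * a * d) * (T1 - d - a * d) = (T1 - d) * T1 + (a * d) * (T1 - 2 * d * (1 + a)) by ring.
    lra.
  have k2 : P * T1 * (T1 - d - a * d) <= Q1 * (T1 + 2 * a * d) * (T1 - d - a * d).
    have : P * T1 * (T1 - d - a * d) <= Q1 * (T1 - d) * T1.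
      have := ler_wpM2r (ltW T1p) F3.
      by rewrite mulrAC.
    have : Q1 * ((T1 - d) * T1) <= Q1 * ((T1 + 2 * a * d) * (T1 - d - a * d)) by rewrite ler_pM2l.
    nra.
  by rewrite ler_pM2r in k2.
have F5 : P <= Q1 + 2 * a * d * Q1 / T1.
  have -> : Q1 + 2 * a * d * Q1 / T1 = Q1 * (T1 + 2 * a * d) / T1 by field; lra.
  by rewrite ler_pdivlMr.
rewrite -/Q1 -/Q2 -/P -/P2 in Hd.
have g2 : w2 * (x2 + d) * (Q2 - a * Q2 / T2 * d) <= w2 * (x2 + d) * P2.
  by apply: ler_wpM2l => //; apply: mulr_ge0; lra.
have g1 : w1 * x1 * (Q1 + a * Q1 / T1 * d) <= w1 * x1 * P.
  by apply: ler_wpM2l => //; apply: mulr_ge0; lra.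
have g3 : w1 * d * P <= w1 * d * (Q1 + 2 * a * d * Q1 / T1).
  by apply: ler_wpM2l => //; apply: mulr_ge0; lra.
have iden : w2 * (x2 + d) * (Q2 - a * Q2 / T2 * d) + w1 * x1 * (Q1 + a * Q1 / T1 * d)
   - w1 * d * (Q1 + 2 * a * d * Q1 / T1) - (w2 * x2 * Q2 + w1 * x1 * Q1) = d * L0 - d * (d * C).
  rewrite /L0 /C; field; lra.
have e : w1 * (x1 - d) * P = w1 * x1 * P - w1 * d * P by ring.
rewrite e in Hd.
have dC : d * C <= L0 / 2.
  rewrite -(ler_pM2r C0) in dL.
  have : L0 / (2 * C) * C = L0 / 2 by field; lra.
  nra.
have : d * (d * C) <= d * (L0 / 2) by rewrite ler_pM2l.
have : 0 < d * L0 by apply: mulr_gt0.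
lra.
Qed.




Lemma sum_dev1 (R : realType) (n : nat) (p : profile R n) (i : 'I_n) (s : R * R) :
  \sum_(j < n) (deviate p i s j).1 = \sum_(j < n) (p j).1 - (p i).1 + s.1.
Proof.
rewrite (bigD1 i) //= [in RHS](bigD1 i) //= /deviate eqxx.
rewrite (eq_bigr (fun j => (p j).1)); last by move=> j /negbTE ->.
ring.
Qed.

Lemma sum_dev2 (R : realType) (n : nat) (p : profile R n) (i : 'I_n) (s : R * R) :
  \sum_(j < n) (deviate p i s j).2 = \sum_(j < n) (p j).2 - (p i).2 + s.2.
Proof.
rewrite (bigD1 i) //= [in RHS](bigD1 i) //= /deviate eqxx.
rewrite (eq_bigr (fun j => (p j).2)); last by move=> j /negbTE ->.
ring.
Qed.

Lemma price_scale (R : realType) (alpha k T : R) : 0 <= k -> 0 <= T ->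
  price alpha (k * T) = k `^ (- alpha) * T `^ (- alpha).
Proof. by move=> k0 T0; rewrite /price powRM. Qed.

Definition wS (R : realType) (R0 lamS Nf alpha : R) :=
  lamS * R0 * (lamS * R0 / Nf) `^ (- alpha).
Definition wM (R : realType) (R0 Nm alpha : R) := R0 * (R0 / Nm) `^ (- alpha).

Lemma rev_gen (R : realType) (n : nat) (R0 lamS Nm Nf alpha : R) (p : profile R n) (i : 'I_n) :
  0 < R0 -> 0 < lamS -> 0 < Nm -> 0 < Nf ->
  0 <= \sum_(j < n) (p j).1 -> 0 <= \sum_(j < n) (p j).2 ->
  revenue R0 lamS Nm Nf alpha p i =
  wS R0 lamS Nf alpha * (p i).2 * (\sum_(j < n) (p j).2) `^ (- alpha)
  + wM R0 Nm alpha * (p i).1 * (\sum_(j < n) (p j).1) `^ (- alpha).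
Proof.
move=> R00 l0 Nm0 Nf0 X0 Y0.
rewrite /revenue /rateS /rateM /wS /wM.
have -> : lamS * R0 * (\sum_(j < n) (p j).2) / Nf = (lamS * R0 / Nf) * (\sum_(j < n) (p j).2) by field; lra.
have -> : R0 * (\sum_(j < n) (p j).1) / Nm = (R0 / Nm) * (\sum_(j < n) (p j).1) by field; lra.
rewrite !price_scale //; try (apply: divr_ge0; nra); try lra.

Qed.

Lemma ne_dev (R : realType) (n : nat) (R0 lamS Nm Nf alpha : R) (B B0 : 'I_n -> R)
  (p : profile R n) (i : 'I_n) (s : R * R) :
  0 < R0 -> 0 < lamS -> 0 < Nm -> 0 < Nf -> (forall j, 0 <= B0 j) ->
  is_NE R0 lamS Nm Nf alpha B B0 p -> feasible (B i) (B0 i) s ->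
  wS R0 lamS Nf alpha * s.2 * (\sum_(j < n) (p j).2 - (p i).2 + s.2) `^ (- alpha)
  + wM R0 Nm alpha * s.1 * (\sum_(j < n) (p j).1 - (p i).1 + s.1) `^ (- alpha)
  <= wS R0 lamS Nf alpha * (p i).2 * (\sum_(j < n) (p j).2) `^ (- alpha)
  + wM R0 Nm alpha * (p i).1 * (\sum_(j < n) (p j).1) `^ (- alpha).
Proof.
move=> R00 l0 Nm0 Nf0 hB0 [hf hne] hs.
have X0 : forall q : profile R n, (forall j, feasible (B j) (B0 j) (q j)) -> 0 <= \sum_(j < n) (q j).1.
  by move=> q hq; apply: sumr_ge0 => j _; case: (hq j).
have Y0 : forall q : profile R n, (forall j, feasible (B j) (B0 j) (q j)) -> 0 <= \sum_(j < n) (q j).2.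
  move=> q hq; apply: sumr_ge0 => j _; case: (hq j) => _ [h _]; exact: le_trans (hB0 j) h.
have hfd : forall j, feasible (B j) (B0 j) (deviate p i s j).
  by move=> j; rewrite /deviate; case: eqP => [->|_].
have := hne i s hs.
rewrite (rev_gen alpha i R00 l0 Nm0 Nf0 (X0 _ hfd) (Y0 _ hfd)).
rewrite (rev_gen alpha i R00 l0 Nm0 Nf0 (X0 _ hf) (Y0 _ hf)).
by rewrite sum_dev1 sum_dev2 /deviate eqxx.
Qed.




Lemma term_le_sum (R : realType) (n : nat) (x : 'I_n -> R) (i : 'I_n) :
  (forall j, 0 <= x j) -> x i <= \sum_(j < n) x j.
Proof.
move=> h; rewrite (bigD1 i) //=.
have : 0 <= \sum_(j < n | j != i) x j by apply: sumr_ge0.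
lra.
Qed.

Lemma incr (R : realType) (a m X e : R) : 0 < a -> a < 1 -> 0 <= m -> m <= X -> 0 < e ->
  m * X `^ (- a) < (m + e) * (X + e) `^ (- a).
Proof.
move=> a0 a1 m0 mX e0.
have qe : 0 < (X + e) `^ (- a) by apply: powR_gt0; lra.
move: m0; rewrite le_eqVlt => /predU1P[<-|mp].
  by rewrite mul0r add0r; apply: mulr_gt0.
have X0 : 0 < X by lra.
have a1' : a != 1 by rewrite lt_eqF.
have hp : X `^ (1 - a) < (X + e) `^ (1 - a).
  apply: gt0_ltr_powR; rewrite ?nnegrE; lra.
rewrite !pow1a // in hp; try lra.
have h1 : m / X * (X * X `^ (- a)) < m / X * ((X + e) * (X + e) `^ (- a)).
  by rewrite ltr_pM2l // divr_gt0.
have h2 : m / X <= (m + e) / (X + e).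
  rewrite ler_pdivrMr // mulrAC ler_pdivlMr; last lra.
  nra.
have h3 : m / X * ((X + e) * (X + e) `^ (- a)) <= (m + e) / (X + e) * ((X + e) * (X + e) `^ (- a)).
  by apply: ler_wpM2r => //; apply: mulr_ge0 => //; lra.
have e1 : m / X * (X * X `^ (- a)) = m * X `^ (- a) by field; lra.
have e2 : (m + e) / (X + e) * ((X + e) * (X + e) `^ (- a)) = (m + e) * (X + e) `^ (- a) by field; lra.
lra.
Qed.

Lemma wS_gt0 (R : realType) (R0 lamS Nf alpha : R) : 0 < R0 -> 0 < lamS -> 0 < Nf ->
  0 < wS R0 lamS Nf alpha.
Proof.
move=> *; rewrite /wS; apply: mulr_gt0; first by apply: mulr_gt0.
by apply: powR_gt0; apply: divr_gt0 => //; apply: mulr_gt0.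
Qed.

Lemma wM_gt0 (R : realType) (R0 Nm alpha : R) : 0 < R0 -> 0 < Nm -> 0 < wM R0 Nm alpha.
Proof.
move=> *; rewrite /wM; apply: mulr_gt0 => //.
by apply: powR_gt0; apply: divr_gt0.
Qed.

Lemma full_use (R : realType) (n : nat) (R0 lamS Nm Nf alpha : R) (B B0 : 'I_n -> R)
  (p : profile R n) (i : 'I_n) :
  0 < R0 -> 0 < lamS -> 0 < Nm -> 0 < Nf -> 0 < alpha -> alpha < 1 -> (forall j, 0 <= B0 j) ->
  is_NE R0 lamS Nm Nf alpha B B0 p -> (p i).1 + (p i).2 = B i.
Proof.
move=> R00 l0 Nm0 Nf0 a0 a1 hB0 hNE.
have [hf _] := hNE.
have [m0 [s0 hsum]] := hf i.
apply/eqP; rewrite eq_le hsum /=; rewrite leNgt; apply/negP => hlt.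
set e := B i - (p i).1 - (p i).2.
have e0 : 0 < e by rewrite /e; lra.
have hs : feasible (B i) (B0 i) ((p i).1 + e, (p i).2).
  by rewrite /feasible /= /e; split; [lra|split; lra].
have := ne_dev R00 l0 Nm0 Nf0 hB0 hNE hs.
rewrite /= addrNK.
have -> : \sum_(j < n) (p j).1 - (p i).1 + ((p i).1 + e) = \sum_(j < n) (p j).1 + e by ring.
have mX : (p i).1 <= \sum_(j < n) (p j).1.
  by apply: (term_le_sum (x := fun j => (p j).1)) => j; case: (hf j).
have := incr a0 a1 m0 mX e0.
have := wM_gt0 alpha R00 Nm0.
set w := wM R0 Nm alpha.
move=> w0 hinc.
have : w * ((p i).1 * (\sum_(j < n) (p j).1) `^ (- alpha)) < w * (((p i).1 + e) * (\sum_(j < n) (p j).1 + e) `^ (- alpha)).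
  by rewrite ltr_pM2l.
rewrite !mulrA.
lra.
Qed.




Lemma foc_MS (R : realType) (n : nat) (R0 lamS Nm Nf alpha : R) (B B0 : 'I_n -> R)
  (p : profile R n) (i : 'I_n) :
  0 < R0 -> 0 < lamS -> 0 < Nm -> 0 < Nf -> 0 < alpha -> alpha < 1 -> (forall j, 0 <= B0 j) ->
  is_NE R0 lamS Nm Nf alpha B B0 p -> 0 < (p i).1 ->
  0 < \sum_(j < n) (p j).2 /\
  wS R0 lamS Nf alpha * (\sum_(j < n) (p j).2) `^ (- alpha) * (1 - alpha * (p i).2 / \sum_(j < n) (p j).2)
  <= wM R0 Nm alpha * (\sum_(j < n) (p j).1) `^ (- alpha) * (1 - alpha * (p i).1 / \sum_(j < n) (p j).1).
Proof.
move=> R00 l0 Nm0 Nf0 a0 a1 hB0 hNE mp.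
have [hf _] := hNE.
have [m0 [s0 hsum]] := hf i.
have sp : 0 <= (p i).2 by exact: le_trans (hB0 i) s0.
have mX : (p i).1 <= \sum_(j < n) (p j).1.
  by apply: (term_le_sum (x := fun j => (p j).1)) => j; case: (hf j).
have sY : (p i).2 <= \sum_(j < n) (p j).2.
  apply: (term_le_sum (x := fun j => (p j).2)) => j; case: (hf j) => _ [h _].
  exact: le_trans (hB0 j) h.
apply: (G_foc a0 a1 (wM_gt0 alpha R00 Nm0) (wS_gt0 alpha R00 l0 Nf0) sp sY mp (lexx _) mX).
move=> d d0 dm.
have hs : feasible (B i) (B0 i) ((p i).1 - d, (p i).2 + d).
  by rewrite /feasible /=; split; [lra|split; lra].
have := ne_dev R00 l0 Nm0 Nf0 hB0 hNE hs.
rewrite /=.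
have -> : \sum_(j < n) (p j).2 - (p i).2 + ((p i).2 + d) = \sum_(j < n) (p j).2 + d by ring.
have -> : \sum_(j < n) (p j).1 - (p i).1 + ((p i).1 - d) = \sum_(j < n) (p j).1 - d by ring.
by [].
Qed.

Lemma foc_SM (R : realType) (n : nat) (R0 lamS Nm Nf alpha : R) (B B0 : 'I_n -> R)
  (p : profile R n) (i : 'I_n) :
  0 < R0 -> 0 < lamS -> 0 < Nm -> 0 < Nf -> 0 < alpha -> alpha < 1 -> (forall j, 0 <= B0 j) ->
  is_NE R0 lamS Nm Nf alpha B B0 p -> B0 i < (p i).2 ->
  0 < \sum_(j < n) (p j).1 /\
  wM R0 Nm alpha * (\sum_(j < n) (p j).1) `^ (- alpha) * (1 - alpha * (p i).1 / \sum_(j < n) (p j).1)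
  <= wS R0 lamS Nf alpha * (\sum_(j < n) (p j).2) `^ (- alpha) * (1 - alpha * (p i).2 / \sum_(j < n) (p j).2).
Proof.
move=> R00 l0 Nm0 Nf0 a0 a1 hB0 hNE sp.
have [hf _] := hNE.
have [m0 [s0 hsum]] := hf i.
have mX : (p i).1 <= \sum_(j < n) (p j).1.
  by apply: (term_le_sum (x := fun j => (p j).1)) => j; case: (hf j).
have sY : (p i).2 <= \sum_(j < n) (p j).2.
  apply: (term_le_sum (x := fun j => (p j).2)) => j; case: (hf j) => _ [h _].
  exact: le_trans (hB0 j) h.
have D0 : 0 < (p i).2 - B0 i by lra.
have Ds : (p i).2 - B0 i <= (p i).2 by have := hB0 i; lra.
apply: (G_foc a0 a1 (wS_gt0 alpha R00 l0 Nf0) (wM_gt0 alpha R00 Nm0) m0 mX D0 Ds sY).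
move=> d d0 dm.
have hs : feasible (B i) (B0 i) ((p i).1 + d, (p i).2 - d).
  by rewrite /feasible /=; split; [lra|split; lra].
have := ne_dev R00 l0 Nm0 Nf0 hB0 hNE hs.
rewrite /=.
have -> : \sum_(j < n) (p j).2 - (p i).2 + ((p i).2 - d) = \sum_(j < n) (p j).2 - d by ring.
have -> : \sum_(j < n) (p j).1 - (p i).1 + ((p i).1 + d) = \sum_(j < n) (p j).1 + d by ring.
lra.
Qed.

Lemma balance (R : realType) (n : nat) (x y : 'I_n -> R) (a P1 P2 : R) :
  (0 < n)%N -> 0 < a -> a < 1 -> (forall i, 0 <= x i) -> (forall i, 0 <= y i) ->
  (forall i, 0 < x i + y i) -> 0 < \sum_(i < n) x i -> 0 < \sum_(i < n) y i ->
  0 <= P1 -> P1 < P2 ->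
  (forall i, 0 < x i -> P2 * (1 - a * y i / \sum_(j < n) y j) <= P1 * (1 - a * x i / \sum_(j < n) x j)) ->
  False.
Proof.
move=> hn a0 a1 hx hy hxy X0 Y0 P10 P12 H.
set X := \sum_(j < n) x j in X0 H; set Y := \sum_(j < n) y j in Y0 H.
have key : forall i, x i / X < y i / Y.
  move=> i.
  have [xz|xp] := eqVneq (x i) 0.
    rewrite xz mul0r; apply: divr_gt0 => //; have := hxy i; lra.
  have xp' : 0 < x i by rewrite lt_neqAle eq_sym xp hx.
  have hi := H i xp'.
  have xX : x i <= X by apply: (term_le_sum (x := x)).
  have r1 : x i / X <= 1 by rewrite ler_pdivrMr // mul1r.
  have pos : 0 < 1 - a * x i / X.
    have : a * x i / X = a * (x i / X) by rewrite mulrA.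
    nra.
  have h2 : P1 * (1 - a * x i / X) < P2 * (1 - a * x i / X) by rewrite ltr_pM2r.
  have h3 : P2 * (1 - a * y i / Y) < P2 * (1 - a * x i / X) by lra.
  rewrite ltr_pM2l in h3; last lra.
  have e1 : a * y i / Y = a * (y i / Y) by rewrite mulrA.
  have e2 : a * x i / X = a * (x i / X) by rewrite mulrA.
  rewrite e1 e2 in h3.
  have : a * (x i / X) < a * (y i / Y) by lra.
  by rewrite ltr_pM2l.
have hs : \sum_(i < n) x i / X < \sum_(i < n) y i / Y.
  apply: ltr_sum => //.
  by apply/hasP; exists (Ordinal hn); rewrite ?mem_index_enum.
rewrite -!mulr_suml -/X -/Y !divff ?gt_eqF // in hs.
by rewrite ltxx in hs.
Qed.




Lemma NE_Ypos (R : realType) (n : nat) (R0 lamS Nm Nf alpha : R) (B B0 : 'I_n -> R)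
  (p : profile R n) :
  (0 < n)%N -> 0 < R0 -> 0 < lamS -> 0 < Nm -> 0 < Nf -> 0 < alpha -> alpha < 1 ->
  (forall j, 0 <= B0 j) -> (forall j, 0 < B j) ->
  is_NE R0 lamS Nm Nf alpha B B0 p -> 0 < \sum_(j < n) (p j).2.
Proof.
move=> hn R00 l0 Nm0 Nf0 a0 a1 hB0 hB hNE.
have [hf _] := hNE.
case: (pselect (exists i, 0 < (p i).1)) => [[i hi]|hno].
  by case: (foc_MS R00 l0 Nm0 Nf0 a0 a1 hB0 hNE hi).
set i0 := Ordinal hn.
have m0 : (p i0).1 = 0.
  have [h _] := hf i0; apply/eqP; rewrite eq_le h andbT leNgt; apply/negP => hp.
  by apply: hno; exists i0.
have hfu := full_use i0 R00 l0 Nm0 Nf0 a0 a1 hB0 hNE.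
have : (p i0).2 <= \sum_(j < n) (p j).2.
  apply: (term_le_sum (x := fun j => (p j).2)) => j; case: (hf j) => _ [h _].
  exact: le_trans (hB0 j) h.
have := hB i0; lra.
Qed.

Lemma NE_Xpos0 (R : realType) (n : nat) (R0 lamS Nm Nf alpha : R) (B : 'I_n -> R)
  (p : profile R n) :
  (0 < n)%N -> 0 < R0 -> 0 < lamS -> 0 < Nm -> 0 < Nf -> 0 < alpha -> alpha < 1 ->
  (forall j, 0 < B j) ->
  is_NE R0 lamS Nm Nf alpha B (fun _ => 0) p -> 0 < \sum_(j < n) (p j).1.
Proof.
move=> hn R00 l0 Nm0 Nf0 a0 a1 hB hNE.
have hB0 : forall j : 'I_n, 0 <= (fun _ => 0 : R) j by move=> j; exact: lexx.
have [hf _] := hNE.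
case: (pselect (exists i, 0 < (p i).2)) => [[i hi]|hno].
  by case: (foc_SM R00 l0 Nm0 Nf0 a0 a1 hB0 hNE hi).
set i0 := Ordinal hn.
have s0 : (p i0).2 = 0.
  have [_ [h _]] := hf i0; apply/eqP; rewrite eq_le h andbT leNgt; apply/negP => hp.
  by apply: hno; exists i0.
have hfu := full_use i0 R00 l0 Nm0 Nf0 a0 a1 hB0 hNE.
have : (p i0).1 <= \sum_(j < n) (p j).1.
  by apply: (term_le_sum (x := fun j => (p j).1)) => j; case: (hf j).
clear hB0 hno hNE hf. have := hB i0; lra.
Qed.

Lemma NE_price (R : realType) (n : nat) (R0 lamS Nm Nf alpha : R) (B B0 : 'I_n -> R)
  (p : profile R n) :
  (0 < n)%N -> 0 < R0 -> 0 < lamS -> 0 < Nm -> 0 < Nf -> 0 < alpha -> alpha < 1 ->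
  (forall j, 0 <= B0 j) -> (forall j, 0 < B j) ->
  is_NE R0 lamS Nm Nf alpha B B0 p -> 0 < \sum_(j < n) (p j).1 ->
  wS R0 lamS Nf alpha * (\sum_(j < n) (p j).2) `^ (- alpha)
  <= wM R0 Nm alpha * (\sum_(j < n) (p j).1) `^ (- alpha).
Proof.
move=> hn R00 l0 Nm0 Nf0 a0 a1 hB0 hB hNE X0.
have [hf _] := hNE.
rewrite leNgt; apply/negP => hlt.
have Y0 := NE_Ypos hn R00 l0 Nm0 Nf0 a0 a1 hB0 hB hNE.
apply: (balance (x := fun j => (p j).1) (y := fun j => (p j).2) hn a0 a1 _ _ _ X0 Y0 _ hlt).
- by move=> j; case: (hf j).
- by move=> j; case: (hf j) => _ [h _]; exact: le_trans (hB0 j) h.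
- by move=> j; rewrite (full_use j R00 l0 Nm0 Nf0 a0 a1 hB0 hNE).
- by apply: mulr_ge0; [apply: ltW; apply: wM_gt0|apply: powR_ge0].
- by move=> i hi; case: (foc_MS R00 l0 Nm0 Nf0 a0 a1 hB0 hNE hi).
Qed.

Lemma NE_price0 (R : realType) (n : nat) (R0 lamS Nm Nf alpha : R) (B : 'I_n -> R)
  (p : profile R n) :
  (0 < n)%N -> 0 < R0 -> 0 < lamS -> 0 < Nm -> 0 < Nf -> 0 < alpha -> alpha < 1 ->
  (forall j, 0 < B j) ->
  is_NE R0 lamS Nm Nf alpha B (fun _ => 0) p ->
  wS R0 lamS Nf alpha * (\sum_(j < n) (p j).2) `^ (- alpha)
  = wM R0 Nm alpha * (\sum_(j < n) (p j).1) `^ (- alpha).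
Proof.
move=> hn R00 l0 Nm0 Nf0 a0 a1 hB hNE.
have hB0 : forall j : 'I_n, 0 <= (fun _ => 0 : R) j by move=> j; exact: lexx.
have [hf _] := hNE.
have X0 := NE_Xpos0 hn R00 l0 Nm0 Nf0 a0 a1 hB hNE.
have Y0 := NE_Ypos hn R00 l0 Nm0 Nf0 a0 a1 hB0 hB hNE.
apply/eqP; rewrite eq_le (NE_price hn R00 l0 Nm0 Nf0 a0 a1 hB0 hB hNE X0) /=.
rewrite leNgt; apply/negP => hlt.
apply: (balance (x := fun j => (p j).2) (y := fun j => (p j).1) hn a0 a1 _ _ _ Y0 X0 _ hlt).
- by move=> j; case: (hf j) => _ [h _]; exact: le_trans (hB0 j) h.
- by move=> j; case: (hf j).
- by move=> j; rewrite addrC (full_use j R00 l0 Nm0 Nf0 a0 a1 hB0 hNE).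
- by apply: mulr_ge0; [apply: ltW; apply: wS_gt0|apply: powR_ge0].
- by move=> i hi; case: (foc_SM R00 l0 Nm0 Nf0 a0 a1 hB0 hNE hi).
Qed.




Definition SWf (R : realType) (R0 lamS Nm Nf alpha X Y : R) :=
  Nm * util alpha (R0 * X / Nm) + Nf * util alpha (lamS * R0 * Y / Nf).

Lemma wS_conv (R : realType) (R0 lamS Nf alpha Y : R) : 0 < R0 -> 0 < lamS -> 0 < Nf -> 0 <= Y ->
  wS R0 lamS Nf alpha * Y `^ (- alpha) = lamS * R0 * (lamS * R0 * Y / Nf) `^ (- alpha).
Proof.
move=> R00 l0 Nf0 Y0; rewrite /wS.
have -> : lamS * R0 * Y / Nf = (lamS * R0 / Nf) * Y by field; lra.
rewrite [in RHS]powRM; [ring| |exact: Y0].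
by apply: divr_ge0; nra.
Qed.

Lemma wM_conv (R : realType) (R0 Nm alpha X : R) : 0 < R0 -> 0 < Nm -> 0 <= X ->
  wM R0 Nm alpha * X `^ (- alpha) = R0 * (R0 * X / Nm) `^ (- alpha).
Proof.
move=> R00 Nm0 X0; rewrite /wM.
have -> : R0 * X / Nm = (R0 / Nm) * X by field; lra.
rewrite [in RHS]powRM; [ring| |exact: X0].
by apply: divr_ge0; nra.
Qed.

Lemma Dec (R : realType) (R0 lamS Nm Nf alpha X1 Y1 X2 Y2 : R) :
  0 < R0 -> 0 < lamS -> 0 < Nm -> 0 < Nf -> 0 < alpha -> alpha < 1 ->
  0 < X1 -> 0 < Y1 -> 0 <= X2 -> 0 <= Y2 -> X1 + Y1 = X2 + Y2 -> Y1 < Y2 ->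
  lamS * R0 * (lamS * R0 * Y1 / Nf) `^ (- alpha) <= R0 * (R0 * X1 / Nm) `^ (- alpha) ->
  SWf R0 lamS Nm Nf alpha X2 Y2 < SWf R0 lamS Nm Nf alpha X1 Y1.
Proof.
move=> R00 l0 Nm0 Nf0 a0 a1 X10 Y10 X20 Y20 hsum hY hP.
rewrite /SWf /util.
set rM1 := R0 * X1 / Nm; set rM2 := R0 * X2 / Nm.
set rS1 := lamS * R0 * Y1 / Nf; set rS2 := lamS * R0 * Y2 / Nf.
rewrite -/rM1 -/rS1 in hP.
have rM10 : 0 < rM1 by rewrite /rM1; apply: divr_gt0 => //; apply: mulr_gt0.
have rS10 : 0 < rS1 by rewrite /rS1; apply: divr_gt0 => //; do 2 apply: mulr_gt0 => //.
have rM20 : 0 <= rM2 by rewrite /rM2; apply: divr_ge0; [apply: mulr_ge0|]; lra.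
have rS20 : 0 <= rS2 by rewrite /rS2; apply: divr_ge0; [apply: mulr_ge0; [apply: mulr_ge0|]|]; lra.
have nS : rS2 != rS1.
  rewrite /rS2 /rS1; apply/negP => /eqP h.
  have : lamS * R0 * Y2 = lamS * R0 * Y1.
    by have := congr1 (fun z => z * Nf) h; rewrite !divfK ?gt_eqF.
  have lr : 0 < lamS * R0 by apply: mulr_gt0.
  move/(mulfI (lt0r_neq0 lr)); lra.
have nM : rM2 != rM1.
  rewrite /rM2 /rM1; apply/negP => /eqP h.
  have : R0 * X2 = R0 * X1.
    by have := congr1 (fun z => z * Nm) h; rewrite !divfK ?gt_eqF.
  move/(mulfI (lt0r_neq0 R00)); lra.
have cS := conc a0 a1 rS20 rS10 nS.
have cM := conc a0 a1 rM20 rM10 nM.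
set b := 1 - alpha.
have b0 : 0 < b by rewrite /b; lra.
set AS1 := rS1 `^ b; set AS2 := rS2 `^ b; set AM1 := rM1 `^ b; set AM2 := rM2 `^ b.
set qS := rS1 `^ (- alpha); set qM := rM1 `^ (- alpha).
have k1 : Nf * AS2 < Nf * (AS1 + b * qS * (rS2 - rS1)) by rewrite ltr_pM2l.
have k2 : Nm * AM2 < Nm * (AM1 + b * qM * (rM2 - rM1)) by rewrite ltr_pM2l.
have iden : Nf * (AS1 + b * qS * (rS2 - rS1)) + Nm * (AM1 + b * qM * (rM2 - rM1))
   = Nf * AS1 + Nm * AM1 + b * (Y2 - Y1) * (lamS * R0 * qS - R0 * qM).
  rewrite /rS1 /rS2 /rM1 /rM2.
  have -> : X2 = X1 + Y1 - Y2 by lra.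
  field; lra.
have k3 : b * (Y2 - Y1) * (lamS * R0 * qS - R0 * qM) <= 0.
  rewrite -mulrA; apply: mulr_ge0_le0; first lra.
  apply: mulr_ge0_le0; first lra.
  rewrite /qS /qM; lra.
have k4 : Nf * AS2 + Nm * AM2 < Nf * AS1 + Nm * AM1 by lra.
have -> : Nm * (AM2 / b) + Nf * (AS2 / b) = (Nf * AS2 + Nm * AM2) / b by field; lra.
have -> : Nm * (AM1 / b) + Nf * (AS1 / b) = (Nf * AS1 + Nm * AM1) / b by field; lra.
by rewrite ltr_pM2r // invr_gt0.
Qed.




Lemma SWopt (R : realType) (R0 lamS Nm Nf alpha X Y : R) :
  0 < R0 -> 0 < lamS -> 0 < Nm -> 0 < Nf -> 0 < alpha -> alpha < 1 -> 0 <= X -> 0 <= Y ->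
  lamS * R0 * (lamS * R0 * Y / Nf) `^ (- alpha) = R0 * (R0 * X / Nm) `^ (- alpha) ->
  SWf R0 lamS Nm Nf alpha X Y = lamS * R0 * (X + Y) * (lamS * R0 * Y / Nf) `^ (- alpha) / (1 - alpha).
Proof.
move=> R00 l0 Nm0 Nf0 a0 a1 X0 Y0 he.
have a1' : alpha != 1 by rewrite lt_eqF.
rewrite /SWf /util !pow1a //; try by (apply: divr_ge0; [repeat apply: mulr_ge0|]; lra).
set qS := (lamS * R0 * Y / Nf) `^ (- alpha) in he *.
set qM := (R0 * X / Nm) `^ (- alpha) in he *.
have hq : qM = lamS * qS.
  apply: (mulfI (lt0r_neq0 R00)); rewrite -he; ring.
rewrite hq; field; lra.
Qed.

Lemma SWcorner (R : realType) (R0 lamS Nm Nf alpha Y : R) :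
  0 < R0 -> 0 < lamS -> 0 < Nm -> 0 < Nf -> 0 < alpha -> alpha < 1 -> 0 <= Y ->
  SWf R0 lamS Nm Nf alpha 0 Y = lamS * R0 * Y * (lamS * R0 * Y / Nf) `^ (- alpha) / (1 - alpha).
Proof.
move=> R00 l0 Nm0 Nf0 a0 a1 Y0.
have a1' : alpha != 1 by rewrite lt_eqF.
rewrite /SWf /util mulr0 mul0r powR0; last by rewrite subr_eq0 eq_sym.
rewrite pow1a //; last by (apply: divr_ge0; [repeat apply: mulr_ge0|]; lra).
field; lra.
Qed.

Lemma Ystar (R : realType) (R0 lamS Nm Nf alpha X Y : R) :
  0 < R0 -> 1 < lamS -> 0 < Nm -> 0 < Nf -> 0 < alpha -> alpha < 1 -> 0 < X -> 0 < Y ->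
  lamS * R0 * (lamS * R0 * Y / Nf) `^ (- alpha) = R0 * (R0 * X / Nm) `^ (- alpha) ->
  Y = (Nf * lamS `^ (alpha^-1 - 1)) / (Nf * lamS `^ (alpha^-1 - 1) + Nm) * (X + Y).
Proof.
move=> R00 l1 Nm0 Nf0 a0 a1 X0 Y0 he.
have l0 : 0 < lamS by lra.
have rS0 : 0 < lamS * R0 * Y / Nf by apply: divr_gt0 => //; do 2 apply: mulr_gt0 => //.
have rM0 : 0 < R0 * X / Nm by apply: divr_gt0 => //; apply: mulr_gt0.
have he' : lamS * (lamS * R0 * Y / Nf) `^ (- alpha) = (R0 * X / Nm) `^ (- alpha).
  apply: (mulfI (lt0r_neq0 R00)); rewrite -he; ring.
have hp := congr1 (fun z => z `^ (- alpha^-1)) he'.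
rewrite /= -!powRrM in hp.
have e1 : - alpha * - alpha^-1 = 1 by field; lra.
rewrite powRM in hp; [|lra|apply: powR_ge0].
rewrite -powRrM e1 !powRr1 in hp; try lra.
(* hp : lamS ^ (-1/a) * rS = rM *)
set k := lamS `^ (- alpha^-1) in hp.
have hk : k * lamS `^ (alpha^-1 - 1) = lamS^-1.
  rewrite /k -powRD; last by rewrite (gt_eqF l0) implybT.
  have -> : - alpha^-1 + (alpha^-1 - 1) = -1 by ring.
  by rewrite powR_inv1 //; lra.
set L := lamS `^ (alpha^-1 - 1) in hk *.
have L0 : 0 < L by apply: powR_gt0.
have hXa : X * (Nf * L) = Nm * Y.
  have h2 : R0 * X / Nm * Nf * L = k * L * (lamS * R0 * Y / Nf) * Nf by rewrite -hp; ring.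
  rewrite hk in h2.
  have : R0 * (X * (Nf * L)) = R0 * (Nm * Y).
    have -> : R0 * (X * (Nf * L)) = R0 * X / Nm * Nf * L * Nm by field; lra.
    rewrite h2; field; lra.
  by move/(mulfI (lt0r_neq0 R00)).
have aN : 0 < Nf * L + Nm by have := mulr_gt0 Nf0 L0; lra.
apply: (mulIf (lt0r_neq0 aN)); rewrite mulrAC divfK ?lt0r_neq0 //.
have -> : Nf * L * (X + Y) = X * (Nf * L) + Nf * L * Y by ring.
rewrite hXa; ring.
Qed.

Unset Implicit Arguments. Set Strict Implicit.

Theorem theorem3 (R : realType) (n : nat) (hn : (0 < n)%N)
  (R0 lamS Nm Nf alpha : R) (B B0 : 'I_n -> R)
  (hR0 : 0 < R0) (hlam : 1 < lamS) (hNm : 0 < Nm) (hNf : 0 < Nf)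
  (ha0 : 0 < alpha) (ha1 : alpha < 1)
  (hB : forall i, 0 < B i) (hB0 : forall i, 0 <= B0 i <= B i)
  (pw pwo : profile R n)
  (Hw : is_NE R0 lamS Nm Nf alpha B B0 pw)
  (Hwo : is_NE R0 lamS Nm Nf alpha B (fun _ => 0) pwo) :
  let a := Nf * lamS `^ (alpha^-1 - 1) in
  let c := a / (a + Nm) in
  let SWw := social_welfare R0 lamS Nm Nf alpha pw in
  let SWwo := social_welfare R0 lamS Nm Nf alpha pwo in
  (c * (\sum_(i < n) B i) < \sum_(i < n) B0 i -> SWw < SWwo) /\
  c `^ alpha <= SWw / SWwo /\
  (SWw / SWwo = c `^ alpha <-> forall i, B0 i = B i).
Proof.
move=> a c SWw SWwo.
have l0 : 0 < lamS by lra.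
have hB0w : forall j, 0 <= B0 j by move=> j; case/andP: (hB0 j).
have [hfw _] := Hw.
have [hfo _] := Hwo.
set Bt := \sum_(i < n) B i.
set Xw := \sum_(j < n) (pw j).1; set Yw := \sum_(j < n) (pw j).2.
set Xo := \sum_(j < n) (pwo j).1; set Yo := \sum_(j < n) (pwo j).2.
have sumw : Xw + Yw = Bt.
  rewrite /Xw /Yw /Bt -big_split; apply: eq_bigr => j _.
  exact: (full_use j hR0 l0 hNm hNf ha0 ha1 hB0w Hw).
have sumo : Xo + Yo = Bt.
  rewrite /Xo /Yo /Bt -big_split; apply: eq_bigr => j _.
  exact: (full_use j hR0 l0 hNm hNf ha0 ha1 (fun j : 'I_n => lexx (0:R)) Hwo).
have Xw0 : 0 <= Xw by apply: sumr_ge0 => j _; case: (hfw j).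
have Yw0 : 0 < Yw := NE_Ypos hn hR0 l0 hNm hNf ha0 ha1 hB0w hB Hw.
have Xo0 : 0 < Xo := NE_Xpos0 hn hR0 l0 hNm hNf ha0 ha1 hB Hwo.
have Yo0 : 0 < Yo := NE_Ypos hn hR0 l0 hNm hNf ha0 ha1 (fun j : 'I_n => lexx (0:R)) hB Hwo.
have heo := NE_price0 hn hR0 l0 hNm hNf ha0 ha1 hB Hwo.
rewrite -/Xo -/Yo wS_conv ?wM_conv // in heo; try lra.
have hYo : Yo = c * Bt by rewrite -sumo; exact: Ystar hR0 hlam hNm hNf ha0 ha1 Xo0 Yo0 heo.
have SWwoE : SWwo = SWf R0 lamS Nm Nf alpha Xo Yo by [].
have SWwE : SWw = SWf R0 lamS Nm Nf alpha Xw Yw by [].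
have Bt0 : 0 < Bt by lra.
have a0 : 0 < a by apply: mulr_gt0 => //; apply: powR_gt0.
have c0 : 0 < c by apply: divr_gt0 => //; lra.
set Sc := SWf R0 lamS Nm Nf alpha 0 Bt.
have hSo := SWopt hR0 l0 hNm hNf ha0 ha1 (ltW Xo0) (ltW Yo0) heo.
rewrite sumo -SWwoE in hSo.
have hSc := SWcorner hR0 l0 hNm hNf ha0 ha1 (ltW Bt0).
rewrite -/Sc in hSc.
have qB0 : 0 < (lamS * R0 * Bt / Nf) `^ (- alpha).
  by apply: powR_gt0; apply: divr_gt0 => //; do 2 apply: mulr_gt0 => //.
have qc : (lamS * R0 * Yo / Nf) `^ (- alpha) = c `^ (- alpha) * (lamS * R0 * Bt / Nf) `^ (- alpha).
  rewrite -powRM; [|lra|by apply: ltW; apply: divr_gt0 => //; do 2 apply: mulr_gt0 => //].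
  by rewrite hYo; congr (_ `^ _); field; lra.
have cpos : 0 < c `^ alpha by apply: powR_gt0.
have SWwo0 : 0 < SWwo.
  rewrite hSo qc; apply: divr_gt0; last lra.
  apply: mulr_gt0; last by apply: mulr_gt0 => //; apply: powR_gt0.
  by apply: mulr_gt0 => //; apply: mulr_gt0.
have ratio : Sc / SWwo = c `^ alpha.
  rewrite hSc hSo qc (powRN c alpha).
  have q0 := lt0r_neq0 qB0; have c1 := lt0r_neq0 cpos.
  field; rewrite q0 c1 !lt0r_neq0 //; lra.
have hPo : lamS * R0 * (lamS * R0 * Yo / Nf) `^ (- alpha) <= R0 * (R0 * Xo / Nm) `^ (- alpha).
  by rewrite heo.
have key : Xw = 0 \/ (0 < Xw /\ Sc < SWw).
  have [Xz|Xn] := eqVneq Xw 0; first by left.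
  right; have Xp : 0 < Xw by rewrite lt_neqAle eq_sym Xn.
  split => //.
  have hp := NE_price hn hR0 l0 hNm hNf ha0 ha1 hB0w hB Hw Xp.
  rewrite -/Xw -/Yw wS_conv ?wM_conv // in hp; try lra.
  rewrite SWwE /Sc.
  apply: (Dec hR0 l0 hNm hNf ha0 ha1 Xp Yw0 (lexx 0) (ltW Bt0)) => //.
  - by rewrite add0r.
  - lra.
have ScE : Xw = 0 -> SWw = Sc.
  by move=> Xz; rewrite SWwE /Sc Xz; have -> : Yw = Bt by lra.
have le1 : Sc <= SWw by case: key => [/ScE ->|[_ /ltW]] //.
split.
  move=> hc.
  have YB : \sum_(i < n) B0 i <= Yw by apply: ler_sum => j _; case: (hfw j) => _ [h _].
  rewrite SWwE SWwoE.
  apply: (Dec hR0 l0 hNm hNf ha0 ha1 Xo0 Yo0 Xw0 (ltW Yw0)) => //.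
  - by rewrite sumo sumw.
  - by rewrite hYo; lra.
split.
  by rewrite -ratio ler_pM2r // invr_gt0.
split.
  rewrite -ratio => hr.
  have hS : SWw = Sc.
    have := congr1 (fun z => z * SWwo) hr; rewrite /= !divfK //; exact: lt0r_neq0.
  have Xz : Xw = 0 by case: key => [//|[_ h]]; rewrite hS ltxx in h.
  have mz : forall j, (pw j).1 = 0.
    move=> j; apply: (psumr_eq0P (P := predT) (F := fun j => (pw j).1)) => //.
    by move=> k _; case: (hfw k).
  move=> i; apply/eqP; rewrite eq_le; case/andP: (hB0 i) => _ -> /=.
  rewrite leNgt; apply/negP => hlt.
  have fu := full_use i hR0 l0 hNm hNf ha0 ha1 hB0w Hw.
  rewrite mz add0r in fu.
  have hlt' : B0 i < (pw i).2 by rewrite fu.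
  have [Xp _] := foc_SM hR0 l0 hNm hNf ha0 ha1 hB0w Hw hlt'.
  by rewrite -/Xw Xz ltxx in Xp.
move=> hall.
have mz : forall j, (pw j).1 = 0.
  move=> j; case: (hfw j) => h1 [h2 h3]; rewrite hall in h2; lra.
have Xz : Xw = 0 by rewrite /Xw big1.
by rewrite -ratio (ScE Xz).
Qed.
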